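(* Let $n\ge2$ and let $X_1,\dots,X_n$ be nonnegative (possibly dependent) random variables with order statistics $X_{1:n}\le\cdots\le X_{n:n}$, and suppose one of the following holds: (A) the distribution function of $X_{n:n}$ has infinite upper endpoint, $X_{n:n}\in\mathrm{GMDA}(h)$ for some positive $h$, and $$\lim_{x\to\infty}\frac{\mathbb{P}(|X_i|>t h(x),X_j>x)}{\mathbb{P}(X_{n:n}>x)}=0\ \text{for all }1\le i\ne j\le n,\ t>0,\qquad(\ast)$$ $$\lim_{x\to\infty}\frac{\mathbb{P}(X_i>Lh(x),X_j>Lh(x))}{\mathbb{P}(X_{n:n}>x)}=0\ \text{for all }1\le i<j\le n\text{ and some }L>0;\qquad(\ast\ast)$$ (B) $X_{n:n}\in\mathcal{L}$ and there exists $h\in\mathcal{H}_{X_{n:n}}$ such that $(\ast)$ and $(\ast\ast)$ hold; (C) $X_{n:n}\in\mathcal{L}\cap\mathcal{D}$ and there exists a dominatedly varying $h\in\mathcal{H}_{X_{n:n}}$ such that $(\ast)$ holds. Then for any $0<a\le b<\infty$ and $0\le d<\infty$, $$\mathbb{P}\Big(\sum_{i=0}^{n-1}c_iX_{n-i:n}>x\Big)\sim\mathbb{P}(c_0X_{n:n}>x)\sim\sum_{i=1}^n\mathbb{P}(c_0X_i>x),\qquad x\to\infty,$$ uniformly for $(c_0,c_1,\dots,c_{n-1})\in[a,b]\times[-d,d]^{n-1}$.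
   Context: Random variables are assumed not degenerate at $0$ (not concentrated on $(-\infty,0]$). For a distribution function $F$, $\overline{F}=1-F$, $x_F=\sup\{x:F(x)<1\}$. $F\in\mathrm{GMDA}(h)$ means $\lim_{x\to x_F}\overline{F}(x+yh(x))/\overline{F}(x)=e^{-y}$ for all $y\in\mathbb{R}$. $F\in\mathcal{L}$ means $\overline{F}(x)>0$ for all $x\ge0$ and $\overline{F}(x+y)\sim\overline{F}(x)$ for all $y\in\mathbb{R}$. $F\in\mathcal{D}$ means $\overline{F}$ is dominatedly varying; a positive $g$ is dominatedly varying if $0<\liminf g(xy)/g(x)\le\limsup g(xy)/g(x)<\infty$ as $x\to\infty$ for every $y>0$. For $F\in\mathcal{L}$, $\mathcal{H}_F$ is the set of eventually positive $h$ with $h(x)=o(x)$, $\overline{F}(x+yh(x))\sim\overline{F}(x)$ for all $y\in\mathbb{R}$, and $\limsup_{x\to\infty}h(x+yh(x))/h(x)<\infty$ for all $y\in\mathbb{R}$. ''Uniformly'' means the suprema over the parameter set of the deviations of the ratios from $1$ tend to $0$. *)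

(* Defs.v *)
From HB Require Import structures.
From mathcomp Require Import all_boot all_order all_algebra.
From mathcomp Require Import all_classical all_reals all_analysis.
Set Implicit Arguments. Unset Strict Implicit. Unset Printing Implicit Defensive.
Import Order.TTheory GRing.Theory Num.Theory.
Import numFieldNormedType.Exports.
Local Open Scope classical_set_scope.
Local Open Scope ring_scope.

Definition pr (d : measure_display) (T : measurableType d) (R : realType)
  (P : probability T R) (A : set T) : R := fine (P A).

Definition tailF (d : measure_display) (T : measurableType d) (R : realType)
  (P : probability T R) (f : T -> R) (x : R) : R := pr P [set w | x < f w].

(* k-th order statistic X_{k:n} (k = 1..n): the k-th smallest of X_1 w, ..., X_n w *)
Definition ordstat (T : Type) (R : realType) (n : nat) (X : 'I_n -> T -> R)
  (k : nat) (w : T) : R :=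
  nth 0 (sort (fun a b : R => a <= b) [seq X i w | i <- enum 'I_n]) k.-1.

(* F in GMDA(h) when x_F = +oo, stated on Fbar *)
Definition GMDA_inf (R : realType) (Fb h : R -> R) : Prop :=
  forall y : R, Fb (x + y * h x) / Fb x @[x --> +oo] --> expR (- y).

Definition classL (R : realType) (Fb : R -> R) : Prop :=
  (forall x, 0 <= x -> 0 < Fb x) /\
  (forall y : R, Fb (x + y) / Fb x @[x --> +oo] --> (1 : R)).

Definition domvar (R : realType) (g : R -> R) : Prop :=
  (\forall x \near +oo, 0 < g x) /\
  (forall y : R, 0 < y ->
     (exists c : R, 0 < c /\ \forall x \near +oo, c <= g (x * y) / g x) /\
     (exists C : R, \forall x \near +oo, g (x * y) / g x <= C)).

Definition classD (R : realType) (Fb : R -> R) : Prop := domvar Fb.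

Definition HF (R : realType) (Fb h : R -> R) : Prop :=
  (\forall x \near +oo, 0 < h x) /\
  (h x / x @[x --> +oo] --> (0 : R)) /\
  (forall y : R, Fb (x + y * h x) / Fb x @[x --> +oo] --> (1 : R)) /\
  (forall y : R, exists C : R, \forall x \near +oo, h (x + y * h x) / h x <= C).

Definition cond_star (d : measure_display) (T : measurableType d) (R : realType)
  (P : probability T R) (n : nat) (X : 'I_n -> T -> R) (h : R -> R) : Prop :=
  forall i j : 'I_n, i != j -> forall t : R, 0 < t ->
    pr P [set w | t * h x < `|X i w| /\ x < X j w] / tailF P (ordstat X n) x
      @[x --> +oo] --> (0 : R).

Definition cond_star2 (d : measure_display) (T : measurableType d) (R : realType)
  (P : probability T R) (n : nat) (X : 'I_n -> T -> R) (h : R -> R) : Prop :=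
  exists L : R, 0 < L /\
  forall i j : 'I_n, (i < j)%N ->
    pr P [set w | L * h x < X i w /\ L * h x < X j w] / tailF P (ordstat X n) x
      @[x --> +oo] --> (0 : R).

(* Main.v *)
Require Import Defs.
From HB Require Import structures.
From mathcomp Require Import all_boot all_order all_algebra.
From mathcomp Require Import all_classical all_reals all_analysis measurable_realfun.
From mathcomp Require Import zify ring lra.
From Stdlib Require Import Lia.
Import Order.TTheory GRing.Theory Num.Theory.
Import numFieldNormedType.Exports.
Local Open Scope classical_set_scope.
Local Open Scope ring_scope.
Set Implicit Arguments. Unset Strict Implicit.
Section OrdStat.
Variables (R : realType) (T : Type) (n : nat) (X : 'I_n -> T -> R).

Lemma card_cnt (P : pred 'I_n) : #|P| = count P (enum 'I_n).
Proof. by rewrite enumT cardE /enum_mem size_filter. Qed.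

Lemma sorted_count (s : seq R) (u : R) (k : nat) :
  sorted (fun a b : R => a <= b) s -> (0 < k <= size s)%N ->
  (u < nth 0 s k.-1) = (size s - k < count (fun v => (u < v)%R) s)%N.
Proof.
move=> ss /andP[k0 ks].
have hj : (k.-1 < size s)%N by case: k k0 ks => // k _ /=.
have mono : forall i j, (i <= j)%N -> (j < size s)%N -> nth 0 s i <= nth 0 s j.
  move=> i j ij js; apply: (sorted_leq_nth le_trans lexx) => //.
  by rewrite inE (leq_ltn_trans ij js).
case: (ltP u (nth 0 s k.-1)) => Hu.
  have A : all (fun v => u < v) (drop k.-1 s).
    apply/(all_nthP 0) => m; rewrite size_drop => hm; rewrite nth_drop.
    apply: (lt_le_trans Hu); apply: mono; first exact: leq_addr.
    by rewrite -ltn_subRL.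
  move: A; rewrite all_count size_drop => /eqP A.
  rewrite -(cat_take_drop k.-1 s) count_cat A size_cat size_take size_drop hj.
  apply/esym; apply/idP; case: k k0 ks {hj Hu A} => // k _ ks /=; lia.
have A : all (predC (fun v => u < v)) (take k s).
  apply/(all_nthP 0) => m; rewrite size_takel // => hm; rewrite nth_take //=.
  rewrite -leNgt; apply: le_trans Hu; apply: mono => //.
  by case: k k0 ks hm {hj} => // k _ _ /=; rewrite ltnS.
move: A; rewrite all_predC has_count -leqNgt leqn0 => /eqP A.
rewrite -(cat_take_drop k s) count_cat A add0n; apply/esym/negbTE.
by rewrite -leqNgt cat_take_drop -size_drop count_size.
Qed.

Definition osq (w : T) := sort (fun a b : R => a <= b) [seq X i w | i <- enum 'I_n].

Lemma size_osq w : size (osq w) = n.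
Proof. by rewrite size_sort size_map size_enum_ord. Qed.

Lemma sorted_osq w : sorted (fun a b : R => a <= b) (osq w).
Proof. by apply: sort_sorted => a b; exact: le_total. Qed.

Lemma os_gt k u w : (0 < k <= n)%N ->
  (u < ordstat X k w) = (n - k < #|[pred i | (u < X i w)%R]|)%N.
Proof.
move=> hk; rewrite /ordstat -/(osq w) sorted_count ?size_osq ?sorted_osq //.
by rewrite /osq count_sort count_map card_cnt.
Qed.

Lemma os_ge0 k w : (forall i, 0 <= X i w) -> 0 <= ordstat X k w.
Proof.
move=> X0; rewrite /ordstat -/(osq w).
have [hk|hk] := ltnP k.-1 (size (osq w)); last by rewrite nth_default.
have := mem_nth 0 hk; rewrite /osq mem_sort => /mapP[i _ ->]; exact: X0.
Qed.

Lemma os_mono k l w : (0 < n)%N -> (k <= l <= n)%N -> ordstat X k w <= ordstat X l w.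
Proof.
move=> n0 /andP[kl ln]; rewrite /ordstat -/(osq w).
apply: (sorted_leq_nth le_trans lexx); first exact: sorted_osq.
- by rewrite inE size_osq; case: k kl => [|k] /=; case: l ln => [|l] //=; lia.
- by rewrite inE size_osq; case: l ln {kl} => [|l] //= ; lia.
- by case: k kl => [|k] /=; case: l {ln} => [|l] //=; lia.
Qed.

Lemma os_max u w : (0 < n)%N -> (u < ordstat X n w) <-> exists i, u < X i w.
Proof.
move=> n0; rewrite os_gt ?n0 ?leqnn // subnn; split.
  by move/card_gt0P => [i]; rewrite inE => ?; exists i.
by move=> [i Hi]; apply/card_gt0P; exists i; rewrite inE.
Qed.

Lemma os_2nd u w j : (2 <= n)%N -> u < ordstat X n.-1 w ->
  exists i, i != j /\ u < X i w.
Proof.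
move=> n2; rewrite os_gt; last by apply/andP; split; lia.
have -> : (n - n.-1 = 1)%N by lia.
rewrite (cardD1 j) => h.
have : (0 < #|[predD1 [pred i | (u < X i w)%R] & j]|)%N.
  by move: h; case: (j \in _); rewrite /= ?add1n ?add0n ?ltnS //; apply: ltnW.
by move/card_gt0P => [i]; rewrite !inE => /andP[? ?]; exists i.
Qed.

End OrdStat.
Section Prob.
Variables (d : measure_display) (T : measurableType d) (R : realType)
  (P : probability T R).

Lemma pr_ge0 A : 0 <= pr P A.
Proof. by apply: fine_ge0; apply: measure_ge0. Qed.

Lemma pr_fin A : measurable A -> P A \is a fin_num.
Proof. by move=> mA; apply: fin_num_measure. Qed.

Lemma pr_le A B : measurable A -> measurable B -> A `<=` B -> pr P A <= pr P B.
Proof.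
move=> mA mB AB; rewrite /pr; apply: fine_le; rewrite ?inE; try exact: pr_fin.
by apply: le_measure; rewrite ?inE.
Qed.

Lemma pr_le1 A : measurable A -> pr P A <= 1.
Proof.
move=> mA; rewrite /pr; have -> : (1 : R) = fine (1%E : \bar R) by [].
by apply: fine_le; rewrite ?inE ?pr_fin //; apply: probability_le1.
Qed.

Lemma pr_U2 A B : measurable A -> measurable B ->
  pr P (A `|` B) <= pr P A + pr P B.
Proof.
move=> mA mB; rewrite /pr -fineD ?inE ?pr_fin //.
apply: fine_le; rewrite ?inE ?pr_fin //; first exact: measurableU.
  by rewrite fin_numD !pr_fin.
exact: measureU2.
Qed.

Lemma pr_sub_nat (A : set T) (F : nat -> set T) m : measurable A ->
  (forall k, measurable (F k)) -> A `<=` \big[setU/set0]_(k < m) F k ->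
  pr P A <= \sum_(k < m) pr P (F k).
Proof.
move=> mA mF AF.
have h := @content_subadditive _ _ _ P A F m (fun k _ => mF k) mA AF.
rewrite -EFin_sum_fine in h; last by move=> k _; apply: pr_fin.
have := @fine_le _ (P A) (\sum_(i < m) fine (P (F i)))%:E.
by apply => //; apply: pr_fin.
Qed.

End Prob.
Section Prob2.
Variables (d : measure_display) (T : measurableType d) (R : realType)
  (P : probability T R).

Lemma pr_sub_fin (I : finType) (A : set T) (F : I -> set T) : measurable A ->
  (forall i, measurable (F i)) -> (forall w, A w -> exists i, F i w) ->
  pr P A <= \sum_i pr P (F i).
Proof.
move=> mA mF AF; case: (pickP (@predT I)) => [x0 _|none].
  pose G k := F (nth x0 (enum I) k).
  have -> : \sum_i pr P (F i) = \sum_(k < #|I|) pr P (G k).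
    by rewrite -big_enum /= (big_nth x0) -cardE big_mkord.
  apply: pr_sub_nat => //; first by move=> k; exact: mF.
  move=> w /AF [i Fi]; rewrite -bigcup_mkord.
  exists (index i (enum I)); first by rewrite /= cardE index_mem mem_enum.
  by rewrite /G nth_index ?mem_enum.
have A0 : A = set0 by apply/seteqP; split => // w /AF [i]; have := none i.
by rewrite A0 /pr measure0 /=; apply: sumr_ge0 => i _; apply: pr_ge0.
Qed.

Lemma pr_sub_fin2 (I J : finType) (A : set T) (F : I -> J -> set T) : measurable A ->
  (forall i j, measurable (F i j)) -> (forall w, A w -> exists i j, F i j w) ->
  pr P A <= \sum_i \sum_j pr P (F i j).
Proof.
move=> mA mF AF; rewrite pair_bigA /=.
apply: (@pr_sub_fin (I * J)%type A (fun p : I * J => F p.1 p.2)) => //.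
by move=> w /AF [i [j Fij]]; exists (i, j).
Qed.

Lemma meas_lt (f : T -> R) y : measurable_fun setT f -> measurable [set w | y < f w].
Proof.
move=> mf; have -> : [set w | y < f w] = setT `&` f @^-1` `]y, +oo[.
  by apply/seteqP; split => w /=; rewrite in_itv /= andbT //; move=> [].
exact: mf.
Qed.

Lemma meas_ex (I : finType) (Q : pred I) (F : I -> set T) :
  (forall i, measurable (F i)) -> measurable [set w | exists i, Q i /\ F i w].
Proof.
move=> mF; have -> : [set w | exists i, Q i /\ F i w] = \bigcup_(i in [set i | Q i]) F i.
  by apply/seteqP; split => w /= [i]; [move=> [] ? ?|move=> ? ?]; exists i.
by apply: fin_bigcup_measurable => //; exact: finite_finset.
Qed.

Lemma bonf (m : nat) (A : 'I_m -> set T) (U : set T) :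
  (forall i, measurable (A i)) -> measurable U -> (forall i, A i `<=` U) ->
  \sum_i pr P (A i) <=
  pr P U + \sum_i \sum_j (if i != j then pr P (A i `&` A j) else 0).
Proof.
move=> mA mU AU.
pose B i := A i `\` [set w | exists j, j != i /\ A j w].
have mB i : measurable (B i) by apply: measurableD => //; apply: meas_ex.
have step i : pr P (A i) <=
    pr P (B i) + \sum_j (if i != j then pr P (A i `&` A j) else 0).
  pose G j := if i == j then B i else A i `&` A j.
  have mG j : measurable (G j) by rewrite /G; case: eqP => _ //; apply: measurableI.
  have cov : forall w, A i w -> exists j, G j w.
    move=> w Aw; case: (pselect (exists j, j != i /\ A j w)) => [[j [ji Ajw]]|nj].
      by exists j; rewrite /G eq_sym (negbTE ji).
    by exists i; rewrite /G eqxx.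
  apply: le_trans (pr_sub_fin (mA i) mG cov) _.
  rewrite (bigD1 i) //= [X in _ <= _ + X](bigD1 i) //= /G eqxx /= add0r.
  by rewrite lerD2l; apply: ler_sum => j /negbTE; rewrite eq_sym => ->.
apply: le_trans (ler_sum _ (fun i _ => step i)) _.
rewrite big_split /= lerD2r.
have tB : trivIset setT B.
  move=> i j _ _ [w [[Aiw Ni] [Ajw Nj]]]; apply/eqP; apply/negPn/negP => ij.
  by apply: Ni; exists j; split => //; rewrite eq_sym.
have := @measure_bigsetU_ord _ _ _ P m xpredT B mB tB.
rewrite -EFin_sum_fine; last by move=> i _; apply: pr_fin.
move=> e; have -> : \sum_i pr P (B i) = pr P (\big[setU/set0]_(i < m) B i).
  by rewrite /pr e.
apply: pr_le => //; first by apply: bigsetU_measurable.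
apply: (big_ind (fun S => S `<=` U)) => //; first by move=> S1 S2 ? ? w [] ?; auto.
by move=> i _ w [Aiw _]; apply: (AU i).
Qed.

End Prob2.
Lemma os_meas (d : measure_display) (T : measurableType d) (R : realType) (n : nat)
  (X : 'I_n -> T -> R) k : (0 < k <= n)%N -> (forall i, measurable_fun setT (X i)) ->
  measurable_fun setT (ordstat X k).
Proof.
move=> hk mX; apply: (measurability _ (RGenOInfty.measurableE R)) => //.
move=> _ [_ [u ->] <-].
pose g w := \sum_(i < n) (\1_([set w | u < X i w]) w : R).
have mg : measurable_fun setT g.
  by apply: measurable_sum => i; apply: measurable_indic; apply: meas_lt.
have gE w : g w = (#|[pred i | (u < X i w)%R]|)%:R.
  rewrite /g (eq_bigr (fun i => (nat_of_bool (u < X i w))%:R)); last first.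
    move=> i _; rewrite indicE; congr (_%:R).
    have -> : (w \in [set w | u < X i w]) = (u < X i w) => //.
    by apply/idP/idP => [/set_mem|?] //; exact: mem_set.
  rewrite -natr_sum; congr (_%:R); rewrite -sum1_card [RHS]big_mkcond /=.
  by apply: eq_bigr => i _; rewrite inE; case: (_ < _).
have -> : setT `&` ordstat X k @^-1` `]u, +oo[ = [set w | (n - k)%:R < g w].
  apply/seteqP; split => w /=; rewrite in_itv /= andbT gE ltr_nat os_gt //.
  by move=> [].
exact: meas_lt.
Qed.
Section Ev.
Variable R : realType.

Lemma ev2 (A B C : R -> Prop) : (\forall y \near +oo, A y) ->
  (\forall y \near +oo, B y) -> (forall y, A y -> B y -> C y) ->
  \forall y \near +oo, C y.
Proof.
move=> [M0 [_ HA]] [M1 [_ HB]] H; exists (Num.max M0 M1); split.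
  by rewrite num_real.
by move=> y; rewrite gt_max => /andP[y0 y1]; apply: H; [apply: HA|apply: HB].
Qed.

Lemma evS (A C : R -> Prop) : (\forall y \near +oo, A y) ->
  (forall y, A y -> C y) -> \forall y \near +oo, C y.
Proof. by move=> hA H; apply: (ev2 hA hA) => y ? _; apply: H. Qed.

Lemma ev_gt (c : R) : \forall y \near +oo, c < y.
Proof. by exists c; split; [rewrite num_real|]. Qed.

Lemma ev_comp (A : R -> Prop) (g : R -> R) (k : R) : 0 < k ->
  (\forall z \near +oo, A z) -> (\forall y \near +oo, k * y <= g y) ->
  \forall y \near +oo, A (g y).
Proof.
move=> k0 [M0 [_ HA]] [M1 [_ Hg]].
exists (Num.max M1 (M0 / k)); split; first by rewrite num_real.
move=> y; rewrite gt_max => /andP[y1 y2]; apply: HA.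
by apply: lt_le_trans (Hg _ y1); rewrite -ltr_pdivrMl // mulrC.
Qed.

Lemma ev_all (I : finType) (A : I -> R -> Prop) :
  (forall i, \forall y \near +oo, A i y) -> \forall y \near +oo, forall i, A i y.
Proof. by move=> H; apply: filter_forall. Qed.

Lemma cvg_ev (f : R -> R) (l : R) : f x @[x --> +oo] --> l ->
  forall e, 0 < e -> \forall x \near +oo, l - e <= f x <= l + e.
Proof.
move=> /cvgrPdist_le H e e0; apply: (evS (H e e0)) => x.
by rewrite ler_distl => /andP[h1 h2]; apply/andP; split; lra.
Qed.

End Ev.
Section Main.
Variables (d : measure_display) (T : measurableType d) (R : realType)
  (P : probability T R) (n : nat) (X : 'I_n -> T -> R).
Hypothesis n2 : (2 <= n)%N.
Hypothesis mX : forall i, measurable_fun setT (X i).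
Hypothesis X0 : forall i w, 0 <= X i w.

Let n0 : (0 < n)%N. Proof. by apply: leq_trans n2. Qed.

Definition MM := ordstat X n.
Definition S2 := ordstat X n.-1.
Definition FF (y : R) := pr P [set w | y < MM w].
Definition Ast (i j : 'I_n) (u z : R) :=
  [set w | i != j /\ u < `|X i w| /\ z < X j w].
Definition Pst (u z : R) := \sum_i \sum_j pr P (Ast i j u z).
Definition small (g : R -> R) :=
  forall e, 0 < e -> \forall y \near +oo, g y <= e * FF y.

Lemma mMM : measurable_fun setT MM.
Proof. by apply: os_meas => //; rewrite n0 leqnn. Qed.

Lemma mS2 : measurable_fun setT S2.
Proof. apply: os_meas => //; apply/andP; split; lia. Qed.

Lemma S2_ge0 w : 0 <= S2 w.
Proof. exact: os_ge0. Qed.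

Lemma S2_le w : S2 w <= MM w.
Proof. apply: os_mono => //; apply/andP; split; lia. Qed.

Lemma mFF y : measurable [set w | y < MM w].
Proof. exact: meas_lt _ mMM. Qed.

Lemma FF_ge0 y : 0 <= FF y.
Proof. exact: pr_ge0. Qed.

Lemma FF_mono y1 y2 : y1 <= y2 -> FF y2 <= FF y1.
Proof.
move=> y12; apply: pr_le; try exact: mFF.
by move=> w /= h; apply: le_lt_trans h.
Qed.

Lemma mAst i j u z : measurable (Ast i j u z).
Proof.
have -> : Ast i j u z = if i != j then [set w | u < `|X i w|] `&` [set w | z < X j w]
                        else set0.
  rewrite /Ast; case: (i != j); apply/seteqP; split => w //=; first by case=> _.
  by case.
case: (i != j) => //; apply: measurableI; apply: meas_lt => //.
exact: measurableT_comp (@normr_measurable _ _) (mX i).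
Qed.

Lemma Pst_ge0 u z : 0 <= Pst u z.
Proof. by apply: sumr_ge0 => i _; apply: sumr_ge0 => j _; apply: pr_ge0. Qed.

Lemma Pst_mono u1 u2 z : u1 <= u2 -> Pst u2 z <= Pst u1 z.
Proof.
move=> u12; apply: ler_sum => i _; apply: ler_sum => j _.
apply: pr_le; try exact: mAst.
by move=> w [ij [h1 h2]]; split => //; split => //; apply: le_lt_trans h1.
Qed.

Lemma S2M_bound u v z : u <= v ->
  pr P [set w | v < S2 w /\ z < MM w] <= Pst u z.
Proof.
move=> uv; apply: (@pr_sub_fin2 _ _ _ P _ _ _ (fun i j => Ast i j u z)).
- by apply: measurableI; [apply: meas_lt _ mS2|apply: mFF].
- by move=> i j; exact: mAst.
move=> w [h1 h2]; have [j hj] := (os_max X z w n0).1 h2.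
have [i [ij hi]] := os_2nd j n2 h1.
exists i, j; split => //; split => //.
by apply: le_lt_trans uv _; apply: lt_le_trans hi _; apply: ler_norm.
Qed.

Lemma sum_dec (c : nat -> R) (dd : R) w : 0 <= dd ->
  (forall i, (0 < i < n)%N -> - dd <= c i <= dd) ->
  `| \sum_(i < n) c i * ordstat X (n - i) w - c 0%N * MM w | <= n%:R * dd * S2 w.
Proof.
move=> dd0 hc; pose i0 : 'I_n := Ordinal n0.
rewrite (bigD1 i0) //= subn0 /MM addrC addrK.
apply: le_trans (ler_norm_sum _ _ _) _.
apply: (@le_trans _ _ (\sum_(i < n | i != i0) dd * S2 w)).
  apply: ler_sum => i ii0; rewrite normrM.
  have ipos : (0 < i)%N.
    rewrite lt0n; move: ii0; apply: contra => /eqP h; apply/eqP; exact: val_inj.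
  have ci : `|c i| <= dd by rewrite ler_norml; apply: hc; rewrite ipos ltn_ord.
  have o0 := os_ge0 (n - i) (X0 ^~ w).
  have o1 : ordstat X (n - i) w <= S2 w.
    apply: os_mono => //; apply/andP; split; last by lia.
    have := ltn_ord i; lia.
  by rewrite (ger0_norm o0); apply: ler_pM.
rewrite [X in _ <= X](_ : _ = \sum_(i < n) dd * S2 w); last first.
  by rewrite sumr_const card_ord -mulrA mulr_natl.
rewrite [X in _ <= X](bigD1 i0) //= lerDr; apply: mulr_ge0 => //; exact: S2_ge0.
Qed.

Lemma upper_incl (c : nat -> R) a dd t hy y w :
  0 < a -> a <= c 0%N -> 0 <= dd -> 0 < t ->
  (forall i, (0 < i < n)%N -> - dd <= c i <= dd) ->
  c 0%N * y < \sum_(i < n) c i * ordstat X (n - i) w ->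
  y - t * hy < MM w \/
  (y < MM w + (n%:R * dd / a) * S2 w /\ t / (n%:R * dd / a + 1) * hy < S2 w).
Proof.
move=> a0 ac dd0 t0 hc hS.
have hD := sum_dec w dd0 hc.
set D := n%:R * dd; have D0 : 0 <= D by rewrite /D mulr_ge0.
set D1 := D / a; have D10 : 0 <= D1 by rewrite /D1 divr_ge0 // ltW.
have s0 := S2_ge0 w.
case: (ltP (y - t * hy) (MM w)) => hM; first by left.
right.
have c0pos : 0 < c 0%N by apply: lt_le_trans ac.
have h1 : c 0%N * (y - MM w) < D * S2 w.
  move: hD; rewrite ler_norml -/D => /andP[_ h2]; rewrite mulrBr; lra.
have h2 : y - MM w < D1 * S2 w.
  case: (ltP (y - MM w) 0) => hq.
    by apply: lt_le_trans hq _; apply: mulr_ge0.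
  rewrite /D1 mulrAC ltr_pdivlMr //; apply: le_lt_trans h1.
  by rewrite [leRHS]mulrC; apply: ler_wpM2l.
split; first lra.
rewrite mulrAC ltr_pdivrMr ?ltr_wpDl // mulrDr mulr1 [S2 w * _]mulrC; lra.
Qed.

Lemma lower_incl (c : nat -> R) a dd t hy y w :
  0 < a -> a <= c 0%N -> 0 <= dd -> 0 < t -> 0 <= hy ->
  (forall i, (0 < i < n)%N -> - dd <= c i <= dd) ->
  y + t * hy < MM w ->
  c 0%N * y < \sum_(i < n) c i * ordstat X (n - i) w \/
  (t / (n%:R * dd / a + 1) * hy < S2 w /\ y < MM w).
Proof.
move=> a0 ac dd0 t0 hy0 hc hM.
have hD := sum_dec w dd0 hc.
set D := n%:R * dd; have D0 : 0 <= D by rewrite /D mulr_ge0.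
set D1 := D / a; have D10 : 0 <= D1 by rewrite /D1 divr_ge0 // ltW.
have th0 : 0 <= t * hy by rewrite mulr_ge0 // ltW.
set s := t / (D1 + 1).
case: (ltP (s * hy) (S2 w)) => hs; first by right; split => //; lra.
left.
have c0pos : 0 < c 0%N by apply: lt_le_trans ac.
have Ds : D * s <= c 0%N * t.
  rewrite /s mulrA ler_pdivrMr ?ltr_wpDl // mulrDr mulr1.
  have -> : c 0%N * t * D1 = (c 0%N / a) * (D * t) by rewrite /D1; ring.
  have ca : 1 <= c 0%N / a by rewrite ler_pdivlMr // mul1r.
  have Dt0 : 0 <= D * t by rewrite mulr_ge0 // ltW.
  have : 1 * (D * t) <= (c 0%N / a) * (D * t) by apply: ler_wpM2r.
  have : 0 <= c 0%N * t by rewrite mulr_ge0 // ltW.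
  rewrite mul1r; lra.
have hDS : D * S2 w <= c 0%N * t * hy.
  apply: (@le_trans _ _ (D * (s * hy))); first by apply: ler_wpM2l.
  by rewrite mulrA ler_wpM2r.
have : c 0%N * (y + t * hy) < c 0%N * MM w by rewrite ltr_pM2l.
move: hD; rewrite ler_norml -/D => /andP[h1 _].
rewrite mulrDr mulrA; lra.
Qed.
Lemma ratio_bound (p q e : R) : 0 < q -> (1 - e) * q <= p <= (1 + e) * q ->
  `|p / q - 1| <= e.
Proof.
move=> q0 /andP[h1 h2]; rewrite ler_norml; apply/andP; split.
  by rewrite lerBrDr addrC ler_pdivlMr.
by rewrite lerBlDr addrC ler_pdivrMr.
Qed.

Lemma ratio_bound2 (p q e : R) : 0 < p -> 0 <= e -> p <= q <= (1 + e) * p ->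
  `|p / q - 1| <= e.
Proof.
move=> p0 e0 /andP[h1 h2]; have q0 : 0 < q by apply: lt_le_trans h1.
rewrite ler_norml; apply/andP; split.
  have h3 : e * p <= e * q by apply: ler_wpM2l.
  rewrite lerBrDr addrC ler_pdivlMr //; move: h2 h3; rewrite ?mulrDl ?mulrBl ?mul1r; lra.
rewrite lerBlDr ler_pdivrMr //; nra.
Qed.

Lemma mSum (c : nat -> R) x :
  measurable [set w | x < \sum_(i < n) c i * ordstat X (n - i) w].
Proof.
apply: meas_lt; apply: measurable_sum => i; apply: measurable_funM => //.
apply: os_meas => //; apply/andP; split; last exact: leq_subr.
by rewrite subn_gt0.
Qed.

Definition Qs (D1 s : R) (h : R -> R) (y : R) :=
  [set w | y < MM w + D1 * S2 w /\ s * h y < S2 w].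

Lemma mQs D1 s h y : measurable (Qs D1 s h y).
Proof.
apply: measurableI; apply: meas_lt; last exact: mS2.
apply: measurable_funD; first exact: mMM.
by apply: measurable_funM => //; exact: mS2.
Qed.
Lemma core (h : R -> R) :
  (\forall y \near +oo, 0 < FF y) ->
  (\forall y \near +oo, 0 <= h y <= y) ->
  (forall e, 0 < e -> exists t, 0 < t /\ \forall y \near +oo,
      FF (y - t * h y) <= (1 + e) * FF y /\ (1 - e) * FF y <= FF (y + t * h y)) ->
  (forall u, 0 < u -> small (fun y => Pst (u * h y) y)) ->
  (forall D1 s, 0 <= D1 -> 0 < s -> small (fun y => pr P (Qs D1 s h y))) ->
  forall a b dd : R, 0 < a -> a <= b -> 0 <= dd ->
  forall eps : R, 0 < eps ->
  \forall x \near +oo, forall c : nat -> R,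
    a <= c 0%N <= b -> (forall i, (0 < i < n)%N -> - dd <= c i <= dd) ->
    `| pr P [set w | x < \sum_(i < n) c i * ordstat X (n - i) w]
         / pr P [set w | x < c 0%N * ordstat X n w] - 1 | <= eps /\
    `| pr P [set w | x < c 0%N * ordstat X n w]
         / (\sum_(i < n) pr P [set w | x < c 0%N * X i w]) - 1 | <= eps.
Proof.
move=> H0 H1 H2 H3 H4 a b dd a0 ab dd0 eps eps0.
pose e := eps / 2; have e0 : 0 < e by rewrite /e divr_gt0.
have [t [t0 Ht]] := H2 e e0.
pose D1 := n%:R * dd / a; have D10 : 0 <= D1 by rewrite /D1 divr_ge0 ?mulr_ge0 // ltW.
pose s := t / (D1 + 1); have s0 : 0 < s by rewrite /s divr_gt0 // ltr_wpDl.
have E4 := H4 D1 s D10 s0 e e0.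
have E5 := H3 s s0 e e0.
have E6 := H3 1 ltr01 eps eps0.
have G : \forall y \near +oo, [/\ 0 < FF y, 0 <= h y <= y,
    FF (y - t * h y) <= (1 + e) * FF y /\ (1 - e) * FF y <= FF (y + t * h y),
    pr P (Qs D1 s h y) <= e * FF y &
    Pst (s * h y) y <= e * FF y /\ Pst (1 * h y) y <= eps * FF y].
  apply: (ev2 H0 (ev2 H1 (ev2 Ht (ev2 E4 (ev2 E5 E6 (fun y a b => conj a b))
    (fun y a b => conj a b)) (fun y a b => conj a b)) (fun y a b => conj a b))).
  by move=> y A [B [C [D' [E' F']]]]; split.
case: G => Y [_ HY].
have b0 : 0 < b by apply: lt_le_trans ab.
exists (Num.max (b * Y) 0); split; first by rewrite num_real.
move=> x; rewrite gt_max => /andP[xY x0] c /andP[ac cb] hc.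
have c0pos : 0 < c 0%N by apply: lt_le_trans ac.
pose y := x / c 0%N.
have xy : x = c 0%N * y by rewrite /y mulrC divfK // gt_eqF.
have yY : Y < y.
  apply: (@lt_le_trans _ _ (x / b)); first by rewrite ltr_pdivlMr // mulrC.
  rewrite /y; apply: ler_wpM2l; first exact: ltW.
  by rewrite lef_pV2 // posrE.
have [F0 /andP[h0 hyy] [Hup Hlo] HQ [H5 H6]] := HY y yY.
have EM : [set w | x < c 0%N * ordstat X n w] = [set w | y < MM w].
  by rewrite xy; apply/seteqP; split => w /=; rewrite ltr_pM2l.
have EX i : [set w | x < c 0%N * X i w] = [set w | y < X i w].
  by rewrite xy; apply/seteqP; split => w /=; rewrite ltr_pM2l.
rewrite EM; change (pr P [set w | y < MM w]) with (FF y).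
under eq_bigr do rewrite EX.
split.
  set A := [set w | x < _].
  have mA : measurable A by apply: mSum.
  have up : pr P A <= FF (y - t * h y) + pr P (Qs D1 s h y).
    apply: le_trans (pr_U2 P (mFF _) (mQs _ _ _ _)).
    apply: pr_le => //; first by apply: measurableU; [exact: mFF|exact: mQs].
    move=> w; rewrite /A xy /= => hw.
    by have := upper_incl (h y) a0 ac dd0 t0 hc hw.
  have lo : FF (y + t * h y) <= pr P A + Pst (s * h y) y.
    apply: le_trans (_ : _ <= pr P (A `|` [set w | s * h y < S2 w /\ y < MM w])) _.
      apply: pr_le => //; first exact: mFF.
        by apply: measurableU => //; apply: measurableI; [apply: meas_lt _ mS2|exact: mFF].
      move=> w /= hw; rewrite /A xy /=.
      by have := lower_incl a0 ac dd0 t0 h0 hc hw.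
    apply: le_trans (pr_U2 P _ _) _ => //.
      by apply: measurableI; [apply: meas_lt _ mS2|exact: mFF].
    by rewrite lerD2l; apply: S2M_bound.
  apply: ratio_bound => //; apply/andP; split.
    rewrite /e in Hlo H5 lo *; lra.
  rewrite /e in Hup HQ up *; lra.
set Sm := \sum_(i < n) _.
have l1 : FF y <= Sm.
  apply: (@pr_sub_fin _ _ _ P _ _ (fun i => [set w | y < X i w])) => //.
  - exact: mFF.
  - by move=> i; apply: meas_lt.
  - by move=> w hw; have := (os_max X y w n0).1 hw.
have l2 : Sm <= FF y + Pst (1 * h y) y.
  apply: le_trans (@bonf _ _ _ P _ (fun i => [set w | y < X i w]) _ _ (mFF y) _) _.
  - by move=> i; apply: meas_lt.
  - by move=> i w hw; apply/(os_max X y w n0); exists i.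
  rewrite lerD2l; apply: ler_sum => i _; apply: ler_sum => j _.
  case: ifP => ij; last exact: pr_ge0.
  apply: pr_le; [by apply: measurableI; apply: meas_lt|exact: mAst|].
  move=> w [hi hj]; split; first by rewrite ij.
  split => //; rewrite mul1r; apply: le_lt_trans hyy _.
  by apply: lt_le_trans hi _; apply: ler_norm.
apply: ratio_bound2 => //; first exact: ltW.
apply/andP; split => //; lra.
Qed.
Lemma small_of_ratio (f : R -> R) : (\forall y \near +oo, 0 < FF y) ->
  f x / FF x @[x --> +oo] --> (0 : R) -> small f.
Proof.
move=> H0 hf e e0; apply: (ev2 H0 (cvg_ev hf e0)) => y F0 /andP[_ h].
by rewrite add0r ler_pdivrMr // in h; rewrite mulrC.
Qed.

Lemma small_le (g g1 : R -> R) : small g1 ->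
  (\forall y \near +oo, g y <= g1 y) -> small g.
Proof.
move=> s1 H e e0; apply: (ev2 (s1 e e0) H) => y h1 h2; exact: le_trans h2 h1.
Qed.

Lemma small_add (g g1 g2 : R -> R) : small g1 -> small g2 ->
  (\forall y \near +oo, g y <= g1 y + g2 y) -> small g.
Proof.
move=> s1 s2 H e e0; have e2 : 0 < e / 2 by rewrite divr_gt0.
apply: (ev2 (ev2 (s1 _ e2) (s2 _ e2) (fun y a b => conj a b)) H) => y [h1 h2] h.
apply: le_trans h _; have -> : e * FF y = e / 2 * FF y + e / 2 * FF y.
  by rewrite -mulrDl -splitr.
exact: lerD.
Qed.

Lemma small_sum (I : finType) (g : R -> R) (G : I -> R -> R) :
  (forall i, small (G i)) ->
  (\forall y \near +oo, g y <= \sum_i G i y) -> small g.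
Proof.
move=> sG H e e0; pose e' := e / (#|I|%:R + 1).
have e'0 : 0 < e' by rewrite divr_gt0 // ltr_wpDl.
apply: (ev2 (ev_all (fun i => sG i e' e'0)) H) => y hG h.
apply: le_trans h _; apply: (@le_trans _ _ (\sum_(i : I) e' * FF y)).
  by apply: ler_sum => i _; apply: hG.
rewrite sumr_const -mulr_natl mulrA ler_wpM2r ?FF_ge0 //.
rewrite /e' mulrA ler_pdivrMr ?ltr_wpDl // mulrDr mulr1 mulrC lerDl.
exact: ltW.
Qed.

Lemma small0 : small (fun _ => 0).
Proof.
move=> e e0; apply: (evS (ev_gt 0)) => y _.
by apply: mulr_ge0; [exact: ltW|exact: FF_ge0].
Qed.

Lemma Pst_small (h : R -> R) : (\forall y \near +oo, 0 < FF y) ->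
  cond_star P X h -> forall u, 0 < u -> small (fun y => Pst (u * h y) y).
Proof.
move=> H0 cs u u0; apply: (small_sum (G := fun i y => \sum_j pr P (Ast i j (u * h y) y))).
  move=> i; apply: (small_sum (G := fun j y => pr P (Ast i j (u * h y) y))).
    move=> j; case: (boolP (i != j)) => ij.
      have E : (fun y => pr P (Ast i j (u * h y) y)) =
          (fun x => pr P [set w | u * h x < `|X i w| /\ x < X j w]).
        apply: funext => y; congr (pr P _).
        by apply/seteqP; split => w /=; [case=> _|move=> ?; split].
      rewrite E; apply: (small_of_ratio H0); exact: cs i j ij u u0.
    apply: (small_le small0); apply: (evS (ev_gt 0)) => y _.
    have -> : Ast i j (u * h y) y = set0.
      by apply/seteqP; split => w //= [ij' _]; move: ij; rewrite ij'.
    by rewrite /pr measure0.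
  by apply: (evS (ev_gt 0)) => y _.
by apply: (evS (ev_gt 0)) => y _.
Qed.

Lemma transfer (h z g : R -> R) (k u C : R) :
  0 < k -> 0 < u -> 0 < C ->
  (forall u, 0 < u -> small (fun y => Pst (u * h y) y)) ->
  (\forall y \near +oo, k * y <= z y) ->
  (\forall y \near +oo, FF (z y) <= C * FF y) ->
  (\forall y \near +oo, g y <= Pst (u * h (z y)) (z y)) -> small g.
Proof.
move=> k0 u0 C0 H3 hz hF hg e e0.
have eC : 0 < e / C by rewrite divr_gt0.
have A := ev_comp k0 (H3 u u0 _ eC) hz.
apply: (ev2 A (ev2 hF hg (fun y a b => conj a b))) => y h1 [h2 h3].
apply: le_trans h3 _; apply: le_trans h1 _.
apply: le_trans (ler_wpM2l (ltW eC) h2) _.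
by rewrite mulrA divfK ?gt_eqF.
Qed.
Lemma small_pr_le (g : R -> R) (A B : R -> set T) :
  (forall y, measurable (A y)) -> (forall y, measurable (B y)) ->
  small (fun y => pr P (B y)) -> (\forall y \near +oo, A y `<=` B y) ->
  small (fun y => pr P (A y)).
Proof.
move=> mA mB sB H; apply: (small_le sB); apply: (evS H) => y AB.
exact: pr_le.
Qed.

Lemma G3_AB (h : R -> R) :
  (\forall y \near +oo, 0 < FF y) ->
  (forall u, 0 < u -> small (fun y => Pst (u * h y) y)) ->
  cond_star2 P X h ->
  (forall K, 0 <= K -> [/\ (\forall y \near +oo, 2^-1 * y <= y - K * h y),
       (exists C, 0 < C /\ \forall y \near +oo, FF (y - K * h y) <= C * FF y) &
       (exists C, 0 < C /\ \forall y \near +oo, h (y - K * h y) <= C * h y)]) ->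
  forall D1 s, 0 <= D1 -> 0 < s -> small (fun y => pr P (Qs D1 s h y)).
Proof.
move=> H0 H3 [L [L0 cs2]] HK D1 s D10 s0.
pose K := D1 * L; have K0 : 0 <= K by rewrite mulr_ge0 // ltW.
have [Hz [C [C0 HC]] [C' [C'0 HC']]] := HK K K0.
pose z y := y - K * h y.
pose A1 y := [set w | L * h y < S2 w].
pose A2 y := [set w | s * h y < S2 w /\ z y < MM w].
have mA1 y : measurable (A1 y) by apply: meas_lt mS2.
have mA2 y : measurable (A2 y) by apply: measurableI; [apply: meas_lt mS2|exact: mFF].
apply: (small_add (g1 := fun y => pr P (A1 y)) (g2 := fun y => pr P (A2 y))).
- pose G (i j : 'I_n) (y : R) := if (i < j)%N then [set w | L * h y < X i w /\ L * h y < X j w]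
                  else set0.
  have mG i j y : measurable (G i j y).
    rewrite /G; case: ifP => _ //; apply: measurableI; exact: meas_lt.
  apply: (small_sum (G := fun i y => \sum_j pr P (G i j y))); last first.
    apply: (evS (ev_gt 0)) => y _.
    apply: (@pr_sub_fin2 _ _ _ P _ _ _ (fun i j => G i j y)) => //.
    move=> w hw; have hM : L * h y < MM w by apply: lt_le_trans hw (S2_le w).
    have [j hj] := (os_max X _ w n0).1 hM.
    have [i [ij hi]] := os_2nd j n2 hw.
    move: ij; rewrite -(inj_eq val_inj) neq_ltn => /orP[lij|lji].
    + by exists i, j; rewrite /G lij.
    + by exists j, i; rewrite /G lji.
  move=> i; apply: (small_sum (G := fun j y => pr P (G i j y))); last first.
    by apply: (evS (ev_gt 0)).
  move=> j; case: (boolP (i < j)%N) => ij; rewrite /G ?ij ?(negbTE ij).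
    exact: (small_of_ratio H0 (cs2 i j ij)).
  by apply: (small_le small0); apply: (evS (ev_gt 0)) => y _; rewrite /pr measure0.
- apply: (transfer (h := h) (z := z) (k := 2^-1) (u := s / C') (C := C)) => //.
  + by rewrite divr_gt0.
  + case: HC' => M0 [M0r HM0]; exists M0; split => // y /HM0 hz; apply: S2M_bound.
    apply: le_trans (ler_wpM2l (ltW (divr_gt0 s0 C'0)) hz) _.
    by rewrite mulrA divfK ?gt_eqF.
- apply: (evS (ev_gt 0)) => y _; apply: le_trans (pr_U2 P (mA1 y) (mA2 y)).
  apply: pr_le; [exact: mQs|exact: measurableU|].
  move=> w [hy hs]; case: (ltP (L * h y) (S2 w)) => hL; first by left.
  right; split => //; rewrite /z.
  have : D1 * S2 w <= K * h y by rewrite /K -mulrA ler_wpM2l.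
  lra.
Qed.
Lemma G3_C (h : R -> R) :
  (\forall y \near +oo, 0 < FF y) ->
  (\forall y \near +oo, 0 <= h y <= y) ->
  (forall u, 0 < u -> small (fun y => Pst (u * h y) y)) ->
  (forall k, 0 < k -> exists C, 0 < C /\ \forall y \near +oo, FF (k * y) <= C * FF y) ->
  (exists C, 0 < C /\ \forall y \near +oo, h (2^-1 * y) <= C * h y) ->
  forall D1 s, 0 <= D1 -> 0 < s -> small (fun y => pr P (Qs D1 s h y)).
Proof.
move=> H0 H1 H3 HF [C' [C'0 HC']] D1 s D10 s0.
pose dl := 2^-1 / (D1 + 1).
have dl0 : 0 < dl by rewrite /dl divr_gt0 ?invr_gt0 // ltr_wpDl.
have hD : D1 * dl <= 2^-1.
  rewrite /dl mulrA ler_pdivrMr ?ltr_wpDl // mulrDr mulr1 [D1 * _]mulrC lerDl.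
  by rewrite invr_ge0.
pose A1 y := [set w | dl * y < S2 w /\ dl * y < MM w].
pose A2 y := [set w | s * h y < S2 w /\ 2^-1 * y < MM w].
have mA1 y : measurable (A1 y) by apply: measurableI; [apply: meas_lt mS2|exact: mFF].
have mA2 y : measurable (A2 y) by apply: measurableI; [apply: meas_lt mS2|exact: mFF].
apply: (small_add (g1 := fun y => pr P (A1 y)) (g2 := fun y => pr P (A2 y))).
- have [C [C0 HC]] := HF dl dl0.
  apply: (transfer (h := h) (z := fun y => dl * y) (k := dl) (u := 1) (C := C)) => //.
    by apply: (evS (ev_gt 0)) => y _.
  have := ev_comp (g := fun y => dl * y) dl0 H1 (evS (ev_gt 0) (fun y _ => lexx _)).
  case=> M0 [M0r HM0]; exists M0; split => // y /HM0 /andP[_ hz].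
  by apply: S2M_bound; rewrite mul1r.
- have i2 : 0 < (2 : R)^-1 by rewrite invr_gt0.
  have [C [C0 HC]] := HF 2^-1 i2.
  apply: (transfer (h := h) (z := fun y => 2^-1 * y) (k := 2^-1) (u := s / C') (C := C)) => //.
  + by rewrite divr_gt0.
  + by apply: (evS (ev_gt 0)) => y _.
  + case: HC' => M0 [M0r HM0]; exists M0; split => // y /HM0 hz; apply: S2M_bound.
    apply: le_trans (ler_wpM2l (ltW (divr_gt0 s0 C'0)) hz) _.
    by rewrite mulrA divfK ?gt_eqF.
- apply: (ev2 (ev_gt 0) (ev_gt 0)) => y y0 _.
  apply: le_trans (pr_U2 P (mA1 y) (mA2 y)).
  apply: pr_le; [exact: mQs|exact: measurableU|].
  move=> w [hy hs]; case: (ltP (dl * y) (S2 w)) => hL.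
    by left; split => //; apply: lt_le_trans hL (S2_le w).
  right; split => //.
  have h1 : D1 * S2 w <= D1 * (dl * y) by rewrite ler_wpM2l.
  have h2 : D1 * dl * y <= 2^-1 * y by rewrite ler_wpM2r // ltW.
  have h3 : y = 2^-1 * y + 2^-1 * y by rewrite -mulrDl -[2^-1]mul1r -splitr mul1r.
  rewrite mulrA in h1; lra.
Qed.
Definition concl := forall a b dd : R, 0 < a -> a <= b -> 0 <= dd ->
  forall eps : R, 0 < eps ->
  \forall x \near +oo, forall c : nat -> R,
    a <= c 0%N <= b -> (forall i, (0 < i < n)%N -> - dd <= c i <= dd) ->
    `| pr P [set w | x < \sum_(i < n) c i * ordstat X (n - i) w]
         / pr P [set w | x < c 0%N * ordstat X n w] - 1 | <= eps /\
    `| pr P [set w | x < c 0%N * ordstat X n w]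
         / (\sum_(i < n) pr P [set w | x < c 0%N * X i w]) - 1 | <= eps.

Lemma HF_facts (h : R -> R) : classL FF -> HF FF h ->
  [/\ (\forall y \near +oo, 0 < FF y), (\forall y \near +oo, 0 <= h y <= y),
   (forall e, 0 < e -> exists t, 0 < t /\ \forall y \near +oo,
      FF (y - t * h y) <= (1 + e) * FF y /\ (1 - e) * FF y <= FF (y + t * h y)) &
   (forall K, 0 <= K -> [/\ (\forall y \near +oo, 2^-1 * y <= y - K * h y),
       (exists C, 0 < C /\ \forall y \near +oo, FF (y - K * h y) <= C * FF y) &
       (exists C, 0 < C /\ \forall y \near +oo, h (y - K * h y) <= C * h y)])].
Proof.
move=> [cl1 cl2] [hpos [hox [hF hh]]].
have H0 : \forall y \near +oo, 0 < FF y.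
  by exists 0; split; [rewrite num_real|move=> y y0; apply: cl1; exact: ltW].
have hsmall : forall c, 0 < c -> \forall y \near +oo, h y <= c * y.
  move=> c c0; apply: (ev2 (ev_gt 0) (cvg_ev hox c0)) => y y0 /andP[_ hy].
  by rewrite add0r ler_pdivrMr // in hy.
split => //.
- apply: (ev2 hpos (hsmall 1 ltr01)) => y h0 hy; rewrite mul1r in hy.
  by rewrite hy ltW.
- move=> e e0; exists 1; split => //.
  have A := cvg_ev (hF 1) e0; have B := cvg_ev (hF (-1)) e0.
  apply: (ev2 H0 (ev2 A B (fun y a b => conj a b))) => y F0 [/andP[a1 _] /andP[_ b2]].
  rewrite mulN1r in b2; rewrite !mul1r.
  rewrite ler_pdivlMr // in a1; rewrite ler_pdivrMr // in b2.
  by split; [exact: b2|rewrite mul1r in a1; exact: a1].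
- move=> K K0; split.
  + have c0 : 0 < (2 * (K + 1))^-1 by rewrite invr_gt0 mulr_gt0 // ltr_wpDl.
    apply: (ev2 (ev_gt 0) (hsmall _ c0)) => y y0 hy.
    have h1 : K * h y <= K * ((2 * (K + 1))^-1 * y) by rewrite ler_wpM2l.
    have h2 : K * (2 * (K + 1))^-1 <= 2^-1.
      have hk : K / (K + 1) <= 1 by rewrite ler_pdivrMr ?ltr_wpDl // mul1r lerDl.
      have -> : K * (2 * (K + 1))^-1 = 2^-1 * (K / (K + 1)) by rewrite invfM; ring.
      by rewrite -[leRHS]mulr1 ler_wpM2l // invr_ge0.
    have h3 : K * (2 * (K + 1))^-1 * y <= 2^-1 * y by rewrite ler_wpM2r // ltW.
    have h4 : y = 2^-1 * y + 2^-1 * y by rewrite -mulrDl -[2^-1]mul1r -splitr mul1r.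
    rewrite mulrA in h1; lra.
  + exists 2; split => //.
    have e1 : (0 : R) < 1 by [].
    apply: (ev2 H0 (cvg_ev (hF (- K)) e1)) => y F0 /andP[_ hy].
    by rewrite mulNr ler_pdivrMr // in hy; apply: le_trans hy _.
  + have [C HC] := hh (- K); exists (Num.max C 1); split.
      by rewrite lt_max ltr01 orbT.
    apply: (ev2 hpos HC) => y h0 hy; rewrite mulNr ler_pdivrMr // in hy.
    by apply: le_trans hy _; apply: ler_wpM2r; [exact: ltW|rewrite le_max lexx].
Qed.

Lemma caseB (h : R -> R) : classL FF -> HF FF h -> cond_star P X h ->
  cond_star2 P X h -> concl.
Proof.
move=> cl hf cs cs2; have [H0 H1 H2 HK] := HF_facts cl hf.
have H3 := Pst_small H0 cs.
exact: (core H0 H1 H2 H3 (G3_AB H0 H3 cs2 HK)).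
Qed.

Lemma caseC (h : R -> R) : classL FF -> classD FF -> domvar h -> HF FF h ->
  cond_star P X h -> concl.
Proof.
move=> cl [_ cD] [hpos hD] hf cs; have [H0 H1 H2 _] := HF_facts cl hf.
have H3 := Pst_small H0 cs.
apply: (core H0 H1 H2 H3); apply: (G3_C H0 H1 H3).
  move=> k k0; have [_ [C HC]] := cD k k0; exists (Num.max C 1); split.
    by rewrite lt_max ltr01 orbT.
  apply: (ev2 H0 HC) => y F0 hy; rewrite ler_pdivrMr // mulrC in hy.
  by apply: le_trans hy _; apply: ler_wpM2r; [exact: FF_ge0|rewrite le_max lexx].
have i2 : 0 < (2 : R)^-1 by rewrite invr_gt0.
have [_ [C HC]] := hD _ i2; exists (Num.max C 1); split.
  by rewrite lt_max ltr01 orbT.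
apply: (ev2 hpos HC) => y h0 hy; rewrite ler_pdivrMr // mulrC in hy.
by apply: le_trans hy _; apply: ler_wpM2r; [exact: ltW|rewrite le_max lexx].
Qed.
Lemma expRm2 : expR (-2) <= (3 : R)^-1.
Proof.
rewrite expRN lef_pV2 ?posrE ?expR_gt0 //.
by have := expR_ge1Dx (2 : R); rewrite (_ : 1 + 2 = 3 :> R) //; lra.
Qed.

Lemma expRm3 : expR (-3) <= expR (-1) / (3 : R).
Proof.
rewrite (_ : -3 = -1 + -2 :> R); last by lra.
by rewrite expRD ler_wpM2l ?expR_ge0 // expRm2.
Qed.

Section CaseA.
Variable h : R -> R.
Hypothesis Fpos : forall x, 0 < FF x.
Hypothesis hpos : forall x, 0 < h x.
Hypothesis gm : GMDA_inf FF h.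

Lemma A_F0 : forall dl, 0 < dl -> \forall y \near +oo, FF y <= dl.
Proof.
move=> dl dl0; case: (pselect (\forall y \near +oo, FF y <= dl)) => // nF.
exfalso.
have Fgt : forall y, dl < FF y.
  move=> y; rewrite ltNge; apply/negP => hy; apply: nF.
  exists y; split; first by rewrite num_real.
  by move=> z yz; apply: le_trans (FF_mono (ltW yz)) hy.
have e6 : (0 : R) < 6^-1 by rewrite invr_gt0.
have A : \forall x \near +oo, FF (x + 2 * h x) <= 2^-1 * FF x.
  case: (cvg_ev (@gm (2)) e6) => M0 [M0r HM0]; exists M0; split => // x /HM0 /andP[_ hx].
  rewrite ler_pdivrMr // in hx; apply: le_trans hx _; apply: ler_wpM2r.
    exact: FF_ge0.
  by have := expRm2; lra.
case: A => Y0 [_ HY].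
pose E := range FF.
have hE : has_inf E.
  split; first by exists (FF 0), 0.
  by exists 0 => _ [y _ <-]; exact: FF_ge0.
have lb : dl <= inf E.
  apply: lb_le_inf; first by exists (FF 0), 0.
  by move=> _ [y _ <-]; apply: ltW.
have L0 : 0 < inf E by apply: lt_le_trans lb.
have L2 : 0 < inf E / 2 by rewrite divr_gt0.
have [v [x1 _ ex1] hv] := inf_adherent L2 hE.
rewrite -ex1 in hv.
pose x2 := Num.max x1 (Y0 + 1).
have hx2 : FF x2 <= FF x1 by apply: FF_mono; rewrite le_max lexx.
have hY : Y0 < x2 by rewrite lt_max; apply/orP; right; lra.
have := HY x2 hY.
have hE2 : E (FF (x2 + 2 * h x2)) by exists (x2 + 2 * h x2).
have := ge_inf (proj2 hE) hE2.
lra.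
Qed.

Lemma A_hsmall : forall c, 0 < c -> \forall y \near +oo, h y <= c * y.
Proof.
move=> c c0; have ci : 0 < c^-1 by rewrite invr_gt0.
have e1 : (0 : R) < 1 by [].
have A := cvg_ev (@gm ((- c^-1))) e1.
pose B := expR (- - c^-1) + 1.
have B0 : 0 < B by rewrite /B ltr_wpDl ?expR_ge0.
have d0 : 0 < FF 0 / (2 * B) by rewrite divr_gt0 ?mulr_gt0.
apply: (ev2 (ev_gt 0) (ev2 A (A_F0 d0) (fun y a b => conj a b))) => y y0 [/andP[_ hy] hF].
rewrite ler_pdivrMr // in hy.
rewrite leNgt; apply/negP => hc.
have neg : y + - c^-1 * h y <= 0.
  rewrite mulNr subr_le0 -(ler_pM2l c0) mulrA divff ?gt_eqF // mul1r.
  exact: ltW.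
have := FF_mono neg.
have : FF 0 / (2 * B) * B = FF 0 / 2.
  have Bn : B != 0 by rewrite gt_eqF.
  by field; rewrite Bn.
have : B * FF y <= B * (FF 0 / (2 * B)) by apply: ler_wpM2l => //; exact: ltW.
have := Fpos 0; rewrite /B in hy |- *; lra.
Qed.

Lemma A_H2 : forall e, 0 < e -> exists t, 0 < t /\ \forall y \near +oo,
  FF (y - t * h y) <= (1 + e) * FF y /\ (1 - e) * FF y <= FF (y + t * h y).
Proof.
move=> e e0; pose t := Num.min e 1 / 4.
have t0 : 0 < t by rewrite /t divr_gt0 // lt_min e0 ltr01.
have t1 : t <= 4^-1 by rewrite /t -[leRHS]mul1r ler_pM2r ?invr_gt0 // ge_min lexx orbT.
have te : t <= e / 4 by rewrite /t ler_pM2r ?invr_gt0 // ge_min lexx.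
exists t; split => //.
have e2 : 0 < e / 2 by rewrite divr_gt0.
have A := cvg_ev (@gm ((- t))) e2; have B := cvg_ev (@gm (t)) e2.
have ex1 : expR (- t) >= 1 - t by have := expR_ge1Dx (- t); lra.
have ex2 : expR t <= 1 + 2 * t.
  have p1 : 0 < 1 - t by lra.
  have : expR t <= (1 - t)^-1.
    by rewrite -[expR t]invrK -expRN lef_pV2 ?posrE ?expR_gt0.
  move=> h1; apply: le_trans h1 _.
  rewrite -[(1 - t)^-1]mul1r ler_pdivrMr //.
  have : t * t <= 4^-1 * t by apply: ler_wpM2r => //; exact: ltW.
  have : 4^-1 * t = t / 4 by rewrite mulrC.
  rewrite mulrDl mul1r mulrBr mulr1 mulrA; lra.
apply: (ev2 A B) => y /andP[_ a2] /andP[b1 _].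
rewrite opprK mulNr ler_pdivrMr ?Fpos // in a2.
rewrite ler_pdivlMr ?Fpos // in b1.
split.
  apply: le_trans a2 _; apply: ler_wpM2r; [exact: FF_ge0|lra].
apply: le_trans b1; apply: ler_wpM2r; [exact: FF_ge0|lra].
Qed.
Lemma A_K : forall K, 0 <= K -> [/\ (\forall y \near +oo, 2^-1 * y <= y - K * h y),
       (exists C, 0 < C /\ \forall y \near +oo, FF (y - K * h y) <= C * FF y) &
       (exists C, 0 < C /\ \forall y \near +oo, h (y - K * h y) <= C * h y)].
Proof.
move=> K K0.
have Hz : \forall y \near +oo, 2^-1 * y <= y - K * h y.
  have c0 : 0 < (2 * (K + 1))^-1 by rewrite invr_gt0 mulr_gt0 // ltr_wpDl.
  apply: (ev2 (ev_gt 0) (A_hsmall c0)) => y y0 hy.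
  have h1 : K * h y <= K * ((2 * (K + 1))^-1 * y) by rewrite ler_wpM2l.
  have h2 : K * (2 * (K + 1))^-1 <= 2^-1.
    have hk : K / (K + 1) <= 1 by rewrite ler_pdivrMr ?ltr_wpDl // mul1r lerDl.
    have -> : K * (2 * (K + 1))^-1 = 2^-1 * (K / (K + 1)) by rewrite invfM; ring.
    by rewrite -[leRHS]mulr1 ler_wpM2l // invr_ge0.
  have h3 : K * (2 * (K + 1))^-1 * y <= 2^-1 * y by rewrite ler_wpM2r // ltW.
  have h4 : y = 2^-1 * y + 2^-1 * y by rewrite -mulrDl -[2^-1]mul1r -splitr mul1r.
  rewrite mulrA in h1; lra.
have e1 : (0 : R) < 1 by [].
split => //.
  exists (expR K + 1); split; first by rewrite ltr_wpDl ?expR_ge0.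
  case: (cvg_ev (@gm (- K)) e1) => M0 [M0r HM0]; exists M0; split => // y /HM0.
  by move=> /andP[_ hy]; rewrite opprK mulNr ler_pdivrMr ?Fpos // in hy.
exists (K + 3); split; first by rewrite ltr_wpDl.
pose r := expR (-1 : R); have r0 : 0 < r by apply: expR_gt0.
have dl0 : 0 < r / 4 by rewrite divr_gt0.
have i2 : 0 < (2 : R)^-1 by rewrite invr_gt0.
have a : \forall z \near +oo, r - r / 4 <= FF (z + 1 * h z) / FF z.
  case: (cvg_ev (@gm 1) dl0) => M0 [M0r HM0]; exists M0; split => // z /HM0.
  by move=> /andP[].
have b : \forall y \near +oo, FF (y + 3 * h y) <= (expR (- 3) + r / 4) * FF y.
  case: (cvg_ev (@gm 3) dl0) => M0 [M0r HM0]; exists M0; split => // y /HM0.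
  by move=> /andP[_ hy]; rewrite ler_pdivrMr ?Fpos // in hy.
have A := ev_comp i2 a Hz.
apply: (ev2 A b) => y ha hb /=.
rewrite leNgt; apply/negP => hc.
set z := y - K * h y in ha hc.
have zy : z <= y by rewrite /z lerBlDr lerDl mulr_ge0 // ltW.
have h1 : y + 3 * h y <= z + 1 * h z.
  rewrite mul1r; apply: ltW; apply: le_lt_trans _ (_ : z + (K + 3) * h y < z + h z).
    by rewrite /z mulrDl; lra.
  by rewrite ltrD2l.
have c1 := FF_mono h1.
have c2 := FF_mono zy.
rewrite ler_pdivlMr ?Fpos // in ha.
have e3 : 0 <= expR (- 3) + r / 4 by rewrite addr_ge0 ?expR_ge0 // ltW.
have c3 : (expR (- 3) + r / 4) * FF y <= (expR (- 3) + r / 4) * FF z by apply: ler_wpM2l.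
have : (r - r / 4) * FF z <= (expR (- 3) + r / 4) * FF z.
  by apply: le_trans ha _; apply: le_trans c1 _; apply: le_trans hb c3.
rewrite ler_pM2r ?Fpos // => hh.
have := expRm3; rewrite -/r; lra.
Qed.

Lemma caseA : cond_star P X h -> cond_star2 P X h -> concl.
Proof.
move=> cs cs2.
have H0 : \forall y \near +oo, 0 < FF y by apply: (evS (ev_gt 0)) => y _; exact: Fpos.
have H1 : \forall y \near +oo, 0 <= h y <= y.
  apply: (evS (A_hsmall ltr01)) => y; rewrite mul1r => hy.
  by rewrite hy ltW ?hpos.
have H3 := Pst_small H0 cs.
exact: (core H0 H1 A_H2 H3 (G3_AB H0 H3 cs2 A_K)).
Qed.

End CaseA.
End Main.

Unset Implicit Arguments.

Theorem corollary3p1 (d : measure_display) (T : measurableType d) (R : realType)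
  (P : probability T R) (n : nat) (X : 'I_n -> T -> R) :
  (2 <= n)%N ->
  (forall i, measurable_fun setT (X i)) ->
  (forall i w, 0 <= X i w) ->
  (forall i, 0 < pr P [set w | 0 < X i w]) ->
  let Fb := tailF P (ordstat X n) in
  ( (* (A) *)
    ((forall x, 0 < Fb x) /\
     exists h : R -> R, (forall x, 0 < h x) /\ GMDA_inf Fb h /\
       cond_star P X h /\ cond_star2 P X h)
  \/ (* (B) *)
    (classL Fb /\
     exists h : R -> R, HF Fb h /\ cond_star P X h /\ cond_star2 P X h)
  \/ (* (C) *)
    (classL Fb /\ classD Fb /\
     exists h : R -> R, domvar h /\ HF Fb h /\ cond_star P X h)) ->
  forall a b dd : R, 0 < a -> a <= b -> 0 <= dd ->
  forall eps : R, 0 < eps ->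
  \forall x \near +oo, forall c : nat -> R,
    a <= c 0%N <= b -> (forall i, (0 < i < n)%N -> - dd <= c i <= dd) ->
    `| pr P [set w | x < \sum_(i < n) c i * ordstat X (n - i) w]
         / pr P [set w | x < c 0%N * ordstat X n w] - 1 | <= eps /\
    `| pr P [set w | x < c 0%N * ordstat X n w]
         / (\sum_(i < n) pr P [set w | x < c 0%N * X i w]) - 1 | <= eps.
Proof.
move=> n2 mX X0 _ Fb H.
case: H => [[Fp [h [hp [gm [cs cs2]]]]]|[[cl [h [hf [cs cs2]]]]|[cl [cD [h [dv [hf cs]]]]]]].
- exact: (caseA n2 mX X0 Fp hp gm cs cs2).
- exact: (caseB n2 mX X0 cl hf cs cs2).
- exact: (caseC n2 mX X0 cl cD dv hf cs).
Qed.
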